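(* For $n,s\in\mathbb{N}$, $$\overline{H}_n(s)=\sum_{k=1}^n(-1)^{k-1}\binom{n}{k}\,{}_{s+1}F_s\left(\{\tfrac12\}^{s},1-k;\{\tfrac32\}^{s};1\right).$$
   Context: $\mathbb{N}$ is the set of positive integers; $\overline{H}_n(s)=\sum_{k=0}^{n-1}\frac{1}{(2k+1)^s}$; $\{a\}^s$ denotes $a$ repeated $s$ times. ${}_{s+1}F_s(a_1,\ldots,a_{s+1};b_1,\ldots,b_s;x)=\sum_{i\geq 0}\frac{(a_1)_i\cdots(a_{s+1})_i}{(b_1)_i\cdots(b_s)_i}\frac{x^i}{i!}$, with $(a)_0=1$, $(a)_i=a(a+1)\cdots(a+i-1)$ for $i>0$ (a finite sum here since $1-k\leq 0$ is an integer). *)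

(* Defs.v *)
From mathcomp Require Import all_boot all_order all_algebra.
Set Implicit Arguments. Unset Strict Implicit. Unset Printing Implicit Defensive.
Import Order.TTheory GRing.Theory Num.Theory.
Local Open Scope ring_scope.

Definition poch (R : pzRingType) (a : R) (i : nat) : R :=
  \prod_(j < i) (a + j%:R).

Definition Hbar (n s : nat) : rat :=
  \sum_(k < n) ((2 * k + 1)%:R ^+ s)^-1.

Definition hyperF_trunc (N : nat) (as_ bs : seq rat) (x : rat) : rat :=
  \sum_(i < N)
    (\prod_(a <- as_) poch a i) / (\prod_(b <- bs) poch b i)
      * x ^+ i / (i`!)%:R.

(* s+1 F s ({1/2}^s, 1-k ; {3/2}^s ; 1).  Since 1-k <= 0 is an integer, all
   terms with index i >= k vanish ((1-k)_i = 0), so the full series equals the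
   partial sum over i < k. *)
Definition F_half (s k : nat) : rat :=
  hyperF_trunc k (rcons (nseq s (1/2)) (1 - k%:R)) (nseq s (3/2)) 1.

(* Main.v *)
Require Import Defs.
From mathcomp Require Import all_boot all_order all_algebra.
From mathcomp Require Import ring.
Set Warnings "-notation-overridden,-ambiguous-paths".
Import Order.TTheory GRing.Theory Num.Theory.
Local Open Scope ring_scope.
Definition g (n i N : nat) : rat :=
  \sum_(0 <= m < N) (-1) ^+ m * ('C(n, m) * 'C(m, i))%:R.

Lemma g_eq n : forall i N, (n < N)%N -> g n i N = (-1) ^+ n * (i == n)%:R.
Proof.
elim: n => [|n IH] i N hN.
  rewrite /g; case: N hN => // N _; rewrite big_nat_recl //= big1_seq.
    by rewrite expr0 mul1r bin0 bin0n mul1n addr0 mul1r.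
  by move=> m _; rewrite bin0n /= mul0n mulr0.
case: N hN => // N hN.
have hN' : (n < N)%N by [].
have step : g n.+1 i N.+1 = g n i N.+1 -
   \sum_(0 <= m < N) (-1) ^+ m * ('C(n, m) * 'C(m.+1, i))%:R.
  rewrite /g big_nat_recl // [in RHS]big_nat_recl //.
  rewrite bin0 bin0n !mul1n.
  have -> : (\sum_(0 <= i0 < N) (-1) ^+ i0.+1 * ('C(n.+1, i0.+1) * 'C(i0.+1, i))%:R : rat)
     = - \sum_(0 <= m < N) (-1) ^+ m * ('C(n, m.+1) * 'C(m.+1, i))%:R
       - \sum_(0 <= m < N) (-1) ^+ m * ('C(n, m) * 'C(m.+1, i))%:R.
    rewrite (eq_bigr (fun m => - ((-1) ^+ m * ('C(n, m.+1) * 'C(m.+1, i))%:R)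
       - (-1) ^+ m * ('C(n, m) * 'C(m.+1, i))%:R)); last first.
      by move=> m _; rewrite binS mulnDl natrD exprS; ring.
    by rewrite big_split /= !sumrN.
  rewrite bin0 mul1n; under [in RHS]eq_bigr => m _ do rewrite ?exprS ?mulN1r ?mulNr.
  rewrite sumrN; ring.
rewrite {}step !IH //; last by apply: ltnW.
case: i => [|j].
  have -> : (\sum_(0 <= m < N) (-1) ^+ m * ('C(n, m) * 'C(m.+1, 0))%:R : rat) = g n 0 N.
    by apply: eq_bigr => m _; rewrite !bin0.
  by rewrite IH // subrr /= mulr0.
have -> : (\sum_(0 <= m < N) (-1) ^+ m * ('C(n, m) * 'C(m.+1, j.+1))%:R : rat) = g n j.+1 N + g n j N.
  rewrite /g -big_split /=; apply: eq_bigr => m _.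
  by rewrite binS mulnDr natrD mulrDr.
rewrite !IH //= eqSS exprS; case: (j == n) => /=; ring.
Qed.

Lemma pochS (a : rat) i : poch a i.+1 = poch a i * (a + i%:R).
Proof. by rewrite /poch big_ord_recr. Qed.

Lemma poch_gt0 (a : rat) i : 0 < a -> 0 < poch a i.
Proof.
move=> ha; rewrite /poch; apply: prodr_gt0 => j _.
by apply: (lt_le_trans ha); rewrite lerDl ler0n.
Qed.

Lemma poch_half i : poch (1/2 : rat) i * (2 * i + 1)%:R = poch (3/2 : rat) i.
Proof.
elim: i => [|i IH]; first by rewrite /poch !big_ord0 mul1r.
rewrite !pochS -IH !natrD !natrM; by field.
Qed.

Lemma poch_ratio i : poch (1/2 : rat) i / poch (3/2 : rat) i = ((2 * i + 1)%:R)^-1.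
Proof.
rewrite -poch_half invfM mulrA mulfV ?mul1r //.
by rewrite gt_eqF // poch_gt0.
Qed.

Lemma poch_neg k i : (i <= k)%N -> poch (1 - k.+1%:R : rat) i = (-1) ^+ i * (k ^_ i)%:R.
Proof.
elim: i => [|i IH] hi; first by rewrite /poch big_ord0 expr0 mul1r ffactn0.
rewrite pochS IH ?(ltnW hi) // ffactnSr natrM natrB ?(ltnW hi) // exprS.
rewrite -addn1 natrD; ring.
Qed.

Lemma prod_nseq (f : rat -> rat) x s : \prod_(a <- nseq s x) f a = f x ^+ s.
Proof.
elim: s => [|s IH]; first by rewrite big_nil expr0.
by rewrite /= big_cons IH exprS.
Qed.

Lemma term_eq s k i : (i <= k)%N ->
  (\prod_(a <- rcons (nseq s (1/2 : rat)) (1 - k.+1%:R)) poch a i) /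
  (\prod_(b <- nseq s (3/2)) poch b i) * 1 ^+ i / (i`!)%:R
  = (-1) ^+ i * ('C(k, i))%:R * ((2 * i + 1)%:R ^+ s)^-1.
Proof.
move=> hi.
rewrite big_rcons /= !prod_nseq poch_neg // expr1n mulr1 -bin_ffact natrM.
have hf : (i`!)%:R != 0 :> rat by rewrite pnatr_eq0 -lt0n fact_gt0.
rewrite -exprVn -poch_ratio expr_div_n.
field.
rewrite hf andbT; apply: expf_neq0; by rewrite gt_eqF // poch_gt0.
Qed.

Definition cc (a : nat -> rat) (j : nat) : rat :=
  \sum_(0 <= i < j.+1) (-1) ^+ i * ('C(j, i))%:R * a i.

Lemma invol (a : nat -> rat) n :
  \sum_(0 <= j < n.+1) (-1) ^+ j * ('C(n, j))%:R * cc a j = a n.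
Proof.
have ext : forall j, (0 <= j < n.+1)%N ->
    (-1) ^+ j * ('C(n, j))%:R * cc a j =
    \sum_(0 <= i < n.+1) (-1) ^+ j * ('C(n, j))%:R * ((-1) ^+ i * ('C(j, i))%:R * a i).
  move=> j /andP[_ hj]; rewrite -mulr_sumr /cc [in RHS](big_cat_nat _ (n:=j.+1)) //=.
  rewrite [X in _ + X]big1_seq ?addr0 // => i /andP[_].
  by rewrite mem_index_iota => /andP[hi _]; rewrite bin_small // mulr0 mul0r.
rewrite (eq_big_nat _ _ ext) exchange_big_nat /=.
rewrite (eq_bigr (fun i => (-1) ^+ i * a i * g n i n.+1)); last first.
  move=> i _; rewrite /g mulr_sumr; apply: eq_bigr => j _; rewrite natrM; ring.
rewrite big_nat_recr //= big1_seq ?add0r; last first.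
  move=> i /andP[_]; rewrite mem_index_iota => /andP[_ hi].
  by rewrite g_eq // ltn_eqF // mulr0 mulr0.
rewrite g_eq // eqxx mulr1 mulrAC -expr2 sqrr_sign mul1r.
by [].
Qed.

Lemma mainL (a : nat -> rat) n :
  \sum_(0 <= j < n) (-1) ^+ j * ('C(n, j.+1))%:R * cc a j = \sum_(0 <= i < n) a i.
Proof.
elim: n => [|n IH]; first by rewrite !big_geq.
rewrite (eq_bigr (fun j => (-1) ^+ j * ('C(n, j.+1))%:R * cc a j +
                           (-1) ^+ j * ('C(n, j))%:R * cc a j)); last first.
  by move=> j _; rewrite binS natrD; ring.
rewrite big_split /= invol big_nat_recr //= bin_small // mulr0 mul0r addr0 IH.
by rewrite [in RHS]big_nat_recr.
Qed.

Theorem corollary3p2 (n s : nat) (hn : (0 < n)%N) (hs : (0 < s)%N) :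
  Hbar n s =
  \sum_(1 <= k < n.+1) (-1) ^+ k.-1 * ('C(n, k))%:R * F_half s k.
Proof.
rewrite big_add1 /=.
rewrite (eq_bigr (fun j => (-1) ^+ j * ('C(n, j.+1))%:R *
            cc (fun i => ((2 * i + 1)%:R ^+ s)^-1) j)); last first.
  move=> j _; congr (_ * _).
  rewrite /F_half /hyperF_trunc /cc big_mkord; apply: eq_bigr => i _.
  by rewrite term_eq // -ltnS.
by rewrite mainL /Hbar big_mkord.
Qed.
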